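(* Let $X$ be a complex Banach space such that $A_u(B_X)=A(B_X)$. If $Y$ is a Banach space isomorphic to $X$ (i.e. there is a bounded linear bijection $T:Y\to X$ with bounded inverse), then $A_u(B_Y)=A(B_Y)$.
   Context: For a complex Banach space $Z$ with open unit ball $B_Z$: $A_u(B_Z)$ is the uniform algebra (supremum norm on $B_Z$) of bounded holomorphic functions on $B_Z$ that are uniformly continuous on $B_Z$; a finite type polynomial on $Z$ is a polynomial in finitely many elements of $Z^*$ (i.e. an element of the algebra generated by $Z^*$ and the constants); $A(B_Z)$ is the set of functions on $B_Z$ that are uniform limits on $B_Z$ of finite type polynomials. Always $A(B_Z)\subset A_u(B_Z)$. *)

(* Defs.v *)
From Stdlib Require Import Reals.
Open Scope R_scope.

Definition C : Type := (R * R)%type.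
Definition C0 : C := (0, 0).
Definition C1 : C := (1, 0).
Definition Cadd (a b : C) : C := (fst a + fst b, snd a + snd b).
Definition Copp (a : C) : C := (- fst a, - snd a).
Definition Cminus (a b : C) : C := Cadd a (Copp b).
Definition Cmul (a b : C) : C :=
  (fst a * fst b - snd a * snd b, fst a * snd b + snd a * fst b).
Definition Cmod (a : C) : R := sqrt (fst a ^ 2 + snd a ^ 2).

Record CBanach := {
  car :> Type;
  vzero : car;
  vadd : car -> car -> car;
  vopp : car -> car;
  vscal : C -> car -> car;
  vnorm : car -> R;
  vadd_assoc : forall x y z, vadd x (vadd y z) = vadd (vadd x y) z;
  vadd_comm : forall x y, vadd x y = vadd y x;
  vadd_0l : forall x, vadd vzero x = x;
  vadd_oppl : forall x, vadd (vopp x) x = vzero;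
  vscal_assoc : forall a b x, vscal a (vscal b x) = vscal (Cmul a b) x;
  vscal_1 : forall x, vscal C1 x = x;
  vscal_distr_v : forall a x y, vscal a (vadd x y) = vadd (vscal a x) (vscal a y);
  vscal_distr_s : forall a b x, vscal (Cadd a b) x = vadd (vscal a x) (vscal b x);
  vnorm_eq0 : forall x, vnorm x = 0 -> x = vzero;
  vnorm_triangle : forall x y, vnorm (vadd x y) <= vnorm x + vnorm y;
  vnorm_scal : forall a x, vnorm (vscal a x) = Cmod a * vnorm x;
  vcomplete : forall u : nat -> car,
    (forall eps, 0 < eps -> exists N, forall m n, (N <= m)%nat -> (N <= n)%nat ->
        vnorm (vadd (u m) (vopp (u n))) < eps) ->
    exists l, forall eps, 0 < eps -> exists N, forall n, (N <= n)%nat ->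
        vnorm (vadd (u n) (vopp l)) < eps
}.

Arguments vzero {c}.
Arguments vadd {c}.
Arguments vopp {c}.
Arguments vscal {c}.
Arguments vnorm {c}.

Definition vsub {X : CBanach} (x y : X) : X := vadd x (vopp y).

Definition inBall {X : CBanach} (x : X) : Prop := vnorm x < 1.

Definition is_linear {X Y : CBanach} (T : X -> Y) : Prop :=
  (forall x y, T (vadd x y) = vadd (T x) (T y)) /\
  (forall a x, T (vscal a x) = vscal a (T x)).

Definition is_bounded_op {X Y : CBanach} (T : X -> Y) : Prop :=
  exists M, forall x, vnorm (T x) <= M * vnorm x.

Definition in_dual {X : CBanach} (phi : X -> C) : Prop :=
  (forall x y, phi (vadd x y) = Cadd (phi x) (phi y)) /\
  (forall a x, phi (vscal a x) = Cmul a (phi x)) /\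
  (exists M, forall x, Cmod (phi x) <= M * vnorm x).

Inductive finite_type_poly {X : CBanach} : (X -> C) -> Prop :=
  | ftp_const : forall c : C, finite_type_poly (fun _ => c)
  | ftp_dual : forall phi, in_dual phi -> finite_type_poly phi
  | ftp_add : forall p q, finite_type_poly p -> finite_type_poly q ->
      finite_type_poly (fun x => Cadd (p x) (q x))
  | ftp_mul : forall p q, finite_type_poly p -> finite_type_poly q ->
      finite_type_poly (fun x => Cmul (p x) (q x)).

(** Functions on B_X are represented by functions X -> C; only their values
    on B_X matter for the predicates below. *)

Definition in_A {X : CBanach} (f : X -> C) : Prop :=
  forall eps, 0 < eps -> exists P, finite_type_poly P /\
    forall x : X, inBall x -> Cmod (Cminus (f x) (P x)) < eps.

Definition holomorphic_on_ball {X : CBanach} (f : X -> C) : Prop :=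
  forall x : X, inBall x -> exists L, in_dual L /\
    forall eps, 0 < eps -> exists delta, 0 < delta /\
      forall h : X, vnorm h < delta ->
        Cmod (Cminus (Cminus (f (vadd x h)) (f x)) (L h)) <= eps * vnorm h.

Definition bounded_on_ball {X : CBanach} (f : X -> C) : Prop :=
  exists M, forall x : X, inBall x -> Cmod (f x) <= M.

Definition unif_cont_on_ball {X : CBanach} (f : X -> C) : Prop :=
  forall eps, 0 < eps -> exists delta, 0 < delta /\
    forall x y : X, inBall x -> inBall y -> vnorm (vsub x y) < delta ->
      Cmod (Cminus (f x) (f y)) < eps.

Definition in_Au {X : CBanach} (f : X -> C) : Prop :=
  bounded_on_ball f /\ holomorphic_on_ball f /\ unif_cont_on_ball f.

Definition Au_eq_A (X : CBanach) : Prop :=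
  forall f : X -> C, in_Au f <-> in_A f.

Definition isomorphic (Y X : CBanach) : Prop :=
  exists (T : Y -> X) (S : X -> Y),
    is_linear T /\ is_bounded_op T /\ is_linear S /\ is_bounded_op S /\
    (forall y, S (T y) = y) /\ (forall x, T (S x) = x).

(* Main.v *)
Require Import Defs.
From Stdlib Require Import Reals Lra Lia Psatz ClassicalEpsilon FunctionalExtensionality Classical.
From mathcomp Require boolp classical_sets.
Require Import Defs.
From Coquelicot Require Import Coquelicot.
Open Scope R_scope.

Lemma CaddE a b : Cadd a b = Cplus a b. Proof. reflexivity. Qed.
Lemma CmulE a b : Cmul a b = Cmult a b. Proof. reflexivity. Qed.
Lemma CoppE a : Defs.Copp a = Coquelicot.Complex.Copp a. Proof. reflexivity. Qed.
Lemma CmodE a : Defs.Cmod a = Coquelicot.Complex.Cmod a. Proof. reflexivity. Qed.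
Lemma CminusE a b : Defs.Cminus a b = Cplus a (Coquelicot.Complex.Copp b). Proof. reflexivity. Qed.
Lemma C0E : Defs.C0 = RtoC 0. Proof. reflexivity. Qed.
Lemma C1E : Defs.C1 = RtoC 1. Proof. reflexivity. Qed.
Lemma CaddF : Defs.Cadd = Coquelicot.Complex.Cplus. Proof. reflexivity. Qed.
Lemma CmulF : Defs.Cmul = Coquelicot.Complex.Cmult. Proof. reflexivity. Qed.
Lemma CoppF : Defs.Copp = Coquelicot.Complex.Copp. Proof. reflexivity. Qed.
Lemma CmodF : Defs.Cmod = Coquelicot.Complex.Cmod. Proof. reflexivity. Qed.
Lemma CminusF : Defs.Cminus = Coquelicot.Complex.Cminus. Proof. reflexivity. Qed.
Ltac cnorm := cbv beta in *; repeat rewrite ?CminusF, ?CaddF, ?CmulF, ?CoppF, ?CmodF, ?C0E, ?C1E in *;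
  change Defs.C with Coquelicot.Complex.C in *.

Section VS.
Variable X : CBanach.
Implicit Types x y z : X.

Lemma vadd_0r x : vadd x vzero = x.
Proof. rewrite vadd_comm; apply vadd_0l. Qed.
Lemma vadd_oppr x : vadd x (vopp x) = vzero.
Proof. rewrite vadd_comm; apply vadd_oppl. Qed.
Lemma vadd_cancel_l x y z : vadd x y = vadd x z -> y = z.
Proof.
  intros H. rewrite <- (vadd_0l _ y), <- (vadd_0l _ z), <- (vadd_oppl _ x), <- !vadd_assoc, H; reflexivity.
Qed.
Lemma vadd_idem x : vadd x x = x -> x = vzero.
Proof. intros H. apply (vadd_cancel_l x). rewrite vadd_0r. exact H. Qed.
Lemma vopp_unique x y : vadd x y = vzero -> y = vopp x.
Proof. intros H. apply (vadd_cancel_l x). rewrite H, vadd_oppr; reflexivity. Qed.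
Lemma vopp_opp x : vopp (vopp x) = x.
Proof. symmetry. apply vopp_unique. apply vadd_oppl. Qed.
Lemma vopp_add x y : vopp (vadd x y) = vadd (vopp x) (vopp y).
Proof.
  symmetry. apply vopp_unique.
  rewrite (vadd_comm _ (vopp x)), vadd_assoc, <- (vadd_assoc _ x), vadd_oppr, vadd_0r, vadd_oppr; reflexivity.
Qed.
Lemma vopp_zero : vopp (@vzero X) = vzero.
Proof. symmetry; apply vopp_unique; apply vadd_0l. Qed.

Lemma vscal_0 x : vscal (RtoC 0) x = vzero.
Proof.
  apply vadd_idem. rewrite <- vscal_distr_s. f_equal. cnorm. apply injective_projections; simpl; ring.
Qed.
Lemma vscal_C0 x : vscal C0 x = vzero.
Proof. apply vscal_0. Qed.
Lemma vscal_zero a : vscal a (@vzero X) = vzero.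
Proof. apply vadd_idem. rewrite <- vscal_distr_v, vadd_0l; reflexivity. Qed.
Lemma vscal_m1 x : vscal (RtoC (-1)) x = vopp x.
Proof.
  apply vopp_unique. rewrite <- (vscal_1 _ x) at 1. rewrite <- vscal_distr_s.
  rewrite <- (vscal_0 x). f_equal. cnorm. apply injective_projections; simpl; ring.
Qed.
Lemma vscal_opp a x : vscal a (vopp x) = vopp (vscal a x).
Proof.
  apply vopp_unique. rewrite <- vscal_distr_v, vadd_oppr, vscal_zero; reflexivity.
Qed.
Lemma vscal_oppC a x : vscal (Coquelicot.Complex.Copp a) x = vopp (vscal a x).
Proof.
  apply vopp_unique. rewrite <- vscal_distr_s. rewrite <- (vscal_0 x). f_equal.
  cnorm. apply injective_projections; simpl; ring.
Qed.
Lemma vscal_assocC a b x : vscal a (vscal b x) = vscal (Cmult a b) x.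
Proof. apply vscal_assoc. Qed.
Lemma vscal_addC a b x : vscal (Cplus a b) x = vadd (vscal a x) (vscal b x).
Proof. apply vscal_distr_s. Qed.
Lemma vscal_1C x : vscal (RtoC 1) x = x.
Proof. apply vscal_1. Qed.

Lemma vnorm_zero : vnorm (@vzero X) = 0.
Proof. rewrite <- (vscal_0 vzero), vnorm_scal. cnorm. rewrite Cmod_0; ring. Qed.
Lemma vnorm_opp x : vnorm (vopp x) = vnorm x.
Proof. rewrite <- vscal_m1, vnorm_scal. cnorm.
  replace (RtoC (-1)) with (Coquelicot.Complex.Copp (RtoC 1)).
  rewrite Cmod_opp, Cmod_1; ring.
  apply injective_projections; simpl; ring. Qed.
Lemma vnorm_ge0 x : 0 <= vnorm x.
Proof.
  pose proof (vnorm_triangle _ x (vopp x)). rewrite vadd_oppr, vnorm_zero, vnorm_opp in H. lra.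
Qed.
Lemma vnorm_sub_sym x y : vnorm (vsub x y) = vnorm (vsub y x).
Proof.
  unfold vsub. rewrite <- vnorm_opp, vopp_add, vopp_opp, vadd_comm; reflexivity.
Qed.
Lemma vnorm_scalR (t : R) x : vnorm (vscal (RtoC t) x) = Rabs t * vnorm x.
Proof. rewrite vnorm_scal. cnorm. rewrite Cmod_R. reflexivity. Qed.
Lemma vnorm_pos x : x <> vzero -> 0 < vnorm x.
Proof.
  intros H. destruct (vnorm_ge0 x) as [h|h]; auto. exfalso; apply H, vnorm_eq0; auto.
Qed.
Lemma vsub_add_scal (a b : C) x : vsub (vscal a x) (vscal b x) = vscal (Cminus a b) x.
Proof. unfold vsub. cnorm. unfold Coquelicot.Complex.Cminus. rewrite vscal_addC, vscal_oppC. reflexivity. Qed.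
Lemma vadd_sub x y : vadd y (vsub x y) = x.
Proof. unfold vsub. rewrite (vadd_comm _ x), vadd_assoc, vadd_oppr, vadd_0l; reflexivity. Qed.
Lemma vsub_addl x y h : vsub (vadd x h) x = h.
Proof. unfold vsub. rewrite (vadd_comm _ x), <- vadd_assoc, vadd_oppr, vadd_0r; reflexivity. Qed.
Lemma vsub_scal a x y : vscal a (vsub x y) = vsub (vscal a x) (vscal a y).
Proof. unfold vsub. rewrite vscal_distr_v, vscal_opp; reflexivity. Qed.
Lemma vnorm_tri_sub x y z : vnorm (vsub x z) <= vnorm (vsub x y) + vnorm (vsub y z).
Proof.
  replace (vsub x z) with (vadd (vsub x y) (vsub y z)). apply vnorm_triangle.
  unfold vsub. rewrite <- vadd_assoc, (vadd_assoc _ (vopp y)), vadd_oppl, vadd_0l; reflexivity.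
Qed.
Lemma vnorm_sub_le x y : vnorm x - vnorm y <= vnorm (vsub x y).
Proof.
  pose proof (vnorm_triangle _ (vsub x y) y). rewrite (vadd_comm), vadd_sub in H. lra.
Qed.
End VS.

Fixpoint csum (n : nat) (F : nat -> Coquelicot.Complex.C) : Coquelicot.Complex.C :=
  match n with O => RtoC 0 | S n => Cplus (csum n F) (F n) end.

Lemma csum_ext n F G : (forall i, (i < n)%nat -> F i = G i) -> csum n F = csum n G.
Proof. induction n; simpl; intros H; auto. rewrite IHn, H; auto. Qed.
Lemma csum_add n F G : csum n (fun i => Cplus (F i) (G i)) = Cplus (csum n F) (csum n G).
Proof. induction n; simpl. apply injective_projections; simpl; ring. rewrite IHn. ring. Qed.
Lemma csum_scal n a F : csum n (fun i => Cmult a (F i)) = Cmult a (csum n F).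
Proof. induction n; simpl. apply injective_projections; simpl; ring. rewrite IHn. ring. Qed.
Lemma csum_shift m F : csum (S m) F = Cplus (F O) (csum m (fun i => F (S i))).
Proof.
  induction m. simpl. ring. change (csum (S (S m)) F) with (Cplus (csum (S m) F) (F (S m))).
  rewrite IHm. simpl. ring.
Qed.
Lemma csum_zero_tail n m F : (n <= m)%nat -> (forall i, (n <= i)%nat -> F i = RtoC 0) -> csum m F = csum n F.
Proof.
  intros Hnm H. induction Hnm; auto. simpl. rewrite IHHnm, H by lia. ring.
Qed.
Lemma csum_swap n m (F : nat -> nat -> Coquelicot.Complex.C) :
  csum n (fun i => csum m (fun j => F i j)) = csum m (fun j => csum n (fun i => F i j)).
Proof.
  induction n; simpl.
  - induction m; simpl; auto. rewrite <- IHm. ring.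
  - rewrite IHn. rewrite <- csum_add. reflexivity.
Qed.
Fixpoint rsum (n : nat) (F : nat -> R) : R := match n with O => 0 | S n => rsum n F + F n end.
Lemma csum_norm n F : Cmod (csum n F) <= rsum n (fun i => Cmod (F i)).
Proof.
  induction n; cbn [csum rsum]. rewrite Cmod_0; lra. eapply Rle_trans. apply Cmod_triangle. lra.
Qed.
Lemma rsum_le n F G : (forall i, (i < n)%nat -> F i <= G i) -> rsum n F <= rsum n G.
Proof. induction n; simpl; intros H. lra. pose proof (H n ltac:(lia)). pose proof (IHn ltac:(auto)). lra. Qed.
Lemma rsum_const n c : rsum n (fun _ => c) = INR n * c.
Proof. induction n; simpl rsum. simpl; ring. rewrite IHn, S_INR; ring. Qed.
Lemma rsum_ge0 n F : (forall i, (i < n)%nat -> 0 <= F i) -> 0 <= rsum n F.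
Proof. induction n; simpl; intros H. lra. pose proof (H n ltac:(lia)). pose proof (IHn ltac:(auto)). lra. Qed.

Definition IsPoly (p : Coquelicot.Complex.C -> Coquelicot.Complex.C) (n : nat) :=
  exists c : nat -> Coquelicot.Complex.C, forall mu, p mu = csum n (fun i => Cmult (c i) (Cpow mu i)).

Lemma IsPoly_ext p q n : IsPoly p n -> (forall mu, p mu = q mu) -> IsPoly q n.
Proof. intros [c Hc] H. exists c; intros; rewrite <- H; auto. Qed.
Lemma IsPoly_const a : IsPoly (fun _ => a) 1.
Proof. exists (fun _ => a); intros; simpl. ring. Qed.
Lemma IsPoly_scal a p n : IsPoly p n -> IsPoly (fun mu => Cmult a (p mu)) n.
Proof.
  intros [c Hc]. exists (fun i => Cmult a (c i)); intros. rewrite Hc, <- csum_scal.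
  apply csum_ext; intros; ring.
Qed.
Lemma IsPoly_shift p n : IsPoly p n -> IsPoly (fun mu => Cmult mu (p mu)) (S n).
Proof.
  intros [c Hc]. exists (fun i => match i with O => RtoC 0 | S j => c j end); intros.
  rewrite csum_shift, Hc, <- csum_scal. simpl.
  replace (Cmult (RtoC 0) (RtoC 1)) with (RtoC 0) by ring.
  rewrite Cplus_0_l. apply csum_ext; intros; simpl; ring.
Qed.
Lemma IsPoly_mono p n m : IsPoly p n -> (n <= m)%nat -> IsPoly p m.
Proof.
  intros [c Hc] Hnm. exists (fun i => if Nat.ltb i n then c i else RtoC 0); intros.
  rewrite Hc. rewrite (csum_zero_tail n m). apply csum_ext; intros.
  destruct (Nat.ltb_spec i n); try lia; auto. auto.
  intros i Hi. destruct (Nat.ltb_spec i n); try lia. ring.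
Qed.
Lemma IsPoly_add p q n m : IsPoly p n -> IsPoly q m -> IsPoly (fun mu => Cplus (p mu) (q mu)) (Nat.max n m).
Proof.
  intros Hp Hq. apply (IsPoly_mono _ _ (Nat.max n m)) in Hp; try lia.
  apply (IsPoly_mono _ _ (Nat.max n m)) in Hq; try lia.
  destruct Hp as [c Hc], Hq as [d Hd]. exists (fun i => Cplus (c i) (d i)); intros.
  rewrite Hc, Hd, <- csum_add. apply csum_ext; intros; ring.
Qed.
Lemma IsPoly_mul p q n m : IsPoly p n -> IsPoly q m -> IsPoly (fun mu => Cmult (p mu) (q mu)) (n + m).
Proof.
  revert p. induction n; intros p [c Hc] Hq.
  - exists (fun _ => RtoC 0); intros. rewrite Hc. simpl. rewrite Cmult_0_l.
    clear. induction m; simpl; auto. rewrite <- IHm. ring.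
  - assert (Hp' : IsPoly (fun mu => csum n (fun i => Cmult (c (S i)) (Cpow mu i))) n) by (exists (fun i => c (S i)); auto).
    pose proof (IHn _ Hp' Hq) as H1.
    apply IsPoly_shift in H1.
    pose proof (IsPoly_scal (c O) _ _ Hq) as H2.
    pose proof (IsPoly_add _ _ _ _ H2 H1) as H3.
    replace (S n + m)%nat with (Nat.max m (S (n + m))) by lia.
    eapply IsPoly_ext; [exact H3|]. intros mu. cbv beta. rewrite Hc, csum_shift.
    assert (E : csum n (fun i => Cmult (c (S i)) (Cpow mu (S i))) = Cmult mu (csum n (fun i => Cmult (c (S i)) (Cpow mu i)))).
    { rewrite <- csum_scal. apply csum_ext; intros; simpl; ring. }
    rewrite E. simpl Cpow. ring.
Qed.

Lemma Cidem_zero (a : C) : Cplus a a = a -> a = RtoC 0.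
Proof. intros H. replace a with (Cminus (Cplus a a) a) at 1 by ring. rewrite H. ring. Qed.

Lemma Cmod_sub_add (a b c d : C) : Cmod (Cminus (Cplus a b) (Cplus c d)) <= Cmod (Cminus a c) + Cmod (Cminus b d).
Proof. replace (Cminus (Cplus a b) (Cplus c d)) with (Cplus (Cminus a c) (Cminus b d)) by ring. apply Cmod_triangle. Qed.
Lemma Cmod_sub_mul (a b c d : C) : Cmod (Cminus (Cmult a b) (Cmult c d)) <= Cmod a * Cmod (Cminus b d) + Cmod d * Cmod (Cminus a c).
Proof. replace (Cminus (Cmult a b) (Cmult c d)) with (Cplus (Cmult a (Cminus b d)) (Cmult d (Cminus a c))) by ring.
  eapply Rle_trans. apply Cmod_triangle. rewrite !Cmod_mult. lra. Qed.

Section Lin.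
Context {X : CBanach}.

Lemma dual_zero (phi : X -> Defs.C) : in_dual phi -> phi vzero = RtoC 0.
Proof.
  intros [Ha _]. apply Cidem_zero. pose proof (Ha vzero vzero). rewrite vadd_0l in H. cnorm. auto.
Qed.
Lemma dual_opp (phi : X -> Defs.C) x : in_dual phi -> phi (vopp x) = Copp (phi x).
Proof.
  intros Hp. pose proof Hp as [Ha _]. pose proof (Ha x (vopp x)). rewrite vadd_oppr, dual_zero in H by auto.
  cnorm. replace (phi (vopp x)) with (Cplus (Cplus (phi x) (phi (vopp x))) (Copp (phi x))) by ring.
  rewrite <- H. ring.
Qed.
Lemma dual_sub (phi : X -> Defs.C) x y : in_dual phi -> phi (vsub x y) = Cminus (phi x) (phi y).
Proof.
  intros Hp. unfold vsub. pose proof Hp as [Ha _]. rewrite Ha, dual_opp by auto. cnorm. ring.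
Qed.
Lemma dual_scal (phi : X -> Defs.C) a x : in_dual phi -> phi (vscal a x) = Cmult a (phi x).
Proof. intros [_ [H _]]. apply H. Qed.
Lemma dual_add (phi : X -> Defs.C) x y : in_dual phi -> phi (vadd x y) = Cplus (phi x) (phi y).
Proof. intros [H _]. apply H. Qed.
Lemma dual_bound (phi : X -> Defs.C) : in_dual phi -> exists M, 0 <= M /\ forall x, Cmod (phi x) <= M * vnorm x.
Proof.
  intros [_ [_ [M HM]]]. exists (Rmax M 0). split. apply Rmax_r.
  intros x. eapply Rle_trans. apply HM. apply Rmult_le_compat_r. apply vnorm_ge0. apply Rmax_l.
Qed.

End Lin.
Section Lin2.
Context {X Y : CBanach}.
Lemma lin_zero (L : X -> Y) : Defs.is_linear L -> L vzero = vzero.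
Proof. intros [Ha _]. apply vadd_idem. rewrite <- Ha, vadd_0l. auto. Qed.
Lemma lin_opp (L : X -> Y) x : Defs.is_linear L -> L (vopp x) = vopp (L x).
Proof. intros HL. apply vopp_unique. destruct HL as [Ha Hs]. rewrite <- Ha, vadd_oppr. apply lin_zero; split; auto. Qed.
Lemma lin_sub (L : X -> Y) x y : Defs.is_linear L -> L (vsub x y) = vsub (L x) (L y).
Proof. intros HL. unfold vsub. rewrite (proj1 HL), lin_opp; auto. Qed.
Lemma bounded_pos (L : X -> Y) : Defs.is_bounded_op L -> exists M, 1 <= M /\ forall x, vnorm (L x) <= M * vnorm x.
Proof.
  intros [M HM]. exists (Rmax M 1). split. apply Rmax_r.
  intros x. eapply Rle_trans. apply HM. apply Rmult_le_compat_r. apply vnorm_ge0. apply Rmax_l.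
Qed.

Lemma dual_comp (phi : Y -> Defs.C) (L : X -> Y) :
  in_dual phi -> Defs.is_linear L -> Defs.is_bounded_op L -> in_dual (fun x => phi (L x)).
Proof.
  intros Hp HL HB. destruct (dual_bound phi Hp) as [M [HM0 HM]]. destruct (bounded_pos L HB) as [K [HK1 HK]].
  split; [|split].
  - intros x y. rewrite (proj1 HL). apply (dual_add phi); auto.
  - intros a x. rewrite (proj2 HL). apply (dual_scal phi); auto.
  - exists (M * K). intros x. eapply Rle_trans. apply HM. rewrite Rmult_assoc.
    apply Rmult_le_compat_l; auto.
Qed.
End Lin2.

Lemma ftp_ext {X : CBanach} (P Q : X -> Defs.C) : finite_type_poly P -> (forall x, P x = Q x) -> finite_type_poly Q.
Proof. intros H E. replace Q with P; auto. apply functional_extensionality; auto. Qed.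
Lemma ftp_cmul {X : CBanach} (a : C) (P : X -> Defs.C) : finite_type_poly P -> finite_type_poly (fun x => Cmult a (P x)).
Proof. intros H. apply (ftp_mul (fun _ => a) P); auto. apply ftp_const. Qed.
Lemma ftp_csum {X : CBanach} n (H : nat -> X -> Defs.C) : (forall i, (i < n)%nat -> finite_type_poly (H i)) ->
  finite_type_poly (fun x => csum n (fun i => H i x)).
Proof.
  induction n; intros Hi; simpl.
  - apply ftp_const.
  - apply (ftp_add (fun x => csum n (fun i => H i x)) (H n)); auto.
Qed.

Lemma ftp_comp_affine {X Y : CBanach} (y0 : Y) (L : X -> Y) (P : Y -> Defs.C) :
  Defs.is_linear L -> Defs.is_bounded_op L -> finite_type_poly P -> finite_type_poly (fun x => P (vadd y0 (L x))).
Proof.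
  intros HL HB HP. induction HP.
  - apply ftp_const.
  - apply (ftp_ext (fun x => Cadd (phi y0) (phi (L x)))).
    apply ftp_add. apply ftp_const. apply ftp_dual. apply dual_comp; auto.
    intros x. symmetry. apply (dual_add phi); auto.
  - apply (ftp_add (fun x => p (vadd y0 (L x))) (fun x => q (vadd y0 (L x)))); auto.
  - apply (ftp_mul (fun x => p (vadd y0 (L x))) (fun x => q (vadd y0 (L x)))); auto.
Qed.
Lemma ftp_comp_lin {X Y : CBanach} (L : X -> Y) (P : Y -> Defs.C) :
  Defs.is_linear L -> Defs.is_bounded_op L -> finite_type_poly P -> finite_type_poly (fun x => P (L x)).
Proof.
  intros HL HB HP. apply (ftp_ext (fun x => P (vadd vzero (L x)))). apply ftp_comp_affine; auto.
  intros; rewrite vadd_0l; auto.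
Qed.

Lemma ftp_poly {X : CBanach} (P : X -> Defs.C) : finite_type_poly P ->
  exists n, forall x, IsPoly (fun mu => P (vscal mu x)) n.
Proof.
  intros HP. induction HP.
  - exists 1%nat. intros; apply IsPoly_const.
  - exists 2%nat. intros x. apply (IsPoly_ext (fun mu => Cmult mu (Cmult (phi x) (RtoC 1)))).
    apply IsPoly_shift. apply IsPoly_scal, IsPoly_const.
    intros mu. rewrite dual_scal by auto. ring.
  - destruct IHHP1 as [n1 H1], IHHP2 as [n2 H2]. exists (Nat.max n1 n2). intros x.
    apply (IsPoly_add _ _ _ _ (H1 x) (H2 x)).
  - destruct IHHP1 as [n1 H1], IHHP2 as [n2 H2]. exists (n1 + n2)%nat. intros x.
    apply (IsPoly_mul _ _ _ _ (H1 x) (H2 x)).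
Qed.

Lemma ftp_ball {Y : CBanach} (P : Y -> Defs.C) : finite_type_poly P ->
  exists Bd L, 0 <= Bd /\ 0 <= L /\ (forall y, inBall y -> Cmod (P y) <= Bd) /\
    (forall y y', inBall y -> inBall y' -> Cmod (Cminus (P y) (P y')) <= L * vnorm (vsub y y')).
Proof.
  unfold inBall. intros HP. induction HP.
  - exists (Cmod c), 0. split; [apply Cmod_ge_0|]. split; [lra|]. split. intros; lra.
    intros. cnorm. replace (Cminus c c) with (RtoC 0) by ring. rewrite Cmod_0. pose proof (vnorm_ge0 _ (vsub y y')). nra.
  - destruct (dual_bound phi H) as [M [HM0 HM]]. exists M, M. repeat split; auto.
    + intros y Hy. eapply Rle_trans. apply HM. pose proof (vnorm_ge0 _ y). nra.
    + intros y y' _ _. rewrite <- dual_sub by auto. apply HM.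
  - destruct IHHP1 as [B1 [L1 [? [? [Hb1 Hl1]]]]], IHHP2 as [B2 [L2 [? [? [Hb2 Hl2]]]]].
    exists (B1 + B2), (L1 + L2). repeat split; try lra.
    + intros y Hy. cnorm. eapply Rle_trans. apply Cmod_triangle. pose proof (Hb1 y Hy); pose proof (Hb2 y Hy). lra.
    + intros y y' Hy Hy'. cnorm.
      eapply Rle_trans. apply Cmod_sub_add. pose proof (Hl1 y y' Hy Hy'); pose proof (Hl2 y y' Hy Hy'). cnorm. lra.
  - destruct IHHP1 as [B1 [L1 [? [? [Hb1 Hl1]]]]], IHHP2 as [B2 [L2 [? [? [Hb2 Hl2]]]]].
    exists (B1 * B2), (B1 * L2 + B2 * L1). repeat split; try nra.
    + intros y Hy. cnorm. rewrite Cmod_mult. pose proof (Hb1 y Hy); pose proof (Hb2 y Hy).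
      apply Rmult_le_compat; auto using Cmod_ge_0.
    + intros y y' Hy Hy'. cnorm.
      eapply Rle_trans. apply Cmod_sub_mul.
      pose proof (Hl1 y y' Hy Hy'); pose proof (Hl2 y y' Hy Hy'). cnorm.
      pose proof (Hb1 y Hy); pose proof (Hb2 y' Hy').
      pose proof (Cmod_ge_0 (p y)); pose proof (Cmod_ge_0 (q y')).
      pose proof (Cmod_ge_0 (Cminus (q y) (q y'))); pose proof (Cmod_ge_0 (Cminus (p y) (p y'))).
      pose proof (vnorm_ge0 _ (vsub y y')).
      assert (Cmod (p y) * Cmod (Cminus (q y) (q y')) <= B1 * (L2 * vnorm (vsub y y'))) by (apply Rmult_le_compat; auto).
      assert (Cmod (q y') * Cmod (Cminus (p y) (p y')) <= B2 * (L1 * vnorm (vsub y y'))) by (apply Rmult_le_compat; auto).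
      nra.
Qed.

Definition Eu (t : R) : C := (cos t, sin t).
Lemma Eu_mult a b : Cmult (Eu a) (Eu b) = Eu (a + b).
Proof. unfold Eu. rewrite cos_plus, sin_plus. apply injective_projections; simpl; ring. Qed.
Lemma Eu_mod a : Cmod (Eu a) = 1.
Proof. unfold Eu, Cmod. simpl fst; simpl snd. replace (cos a ^ 2 + sin a ^ 2) with 1. apply sqrt_1.
  rewrite <- (sin2_cos2 a). unfold Rsqr. ring. Qed.
Lemma Eu_0 : Eu 0 = RtoC 1.
Proof. unfold Eu. rewrite cos_0, sin_0. reflexivity. Qed.
Lemma Eu_pow a k : Cpow (Eu a) k = Eu (INR k * a).
Proof.
  induction k. simpl. rewrite Rmult_0_l, Eu_0. reflexivity.
  simpl Cpow. rewrite IHk, Eu_mult. f_equal. rewrite S_INR. ring.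
Qed.
Lemma Cpow_mult a b k : Cpow (Cmult a b) k = Cmult (Cpow a k) (Cpow b k).
Proof. induction k; simpl. ring. rewrite IHk. ring. Qed.
Lemma Cpow_RtoC r k : Cpow (RtoC r) k = RtoC (r ^ k).
Proof. induction k; simpl. reflexivity. rewrite IHk. apply injective_projections; simpl; ring. Qed.

Lemma geom_Eu a m : Eu a <> RtoC 1 -> Eu (INR m * a) = RtoC 1 ->
  csum m (fun k => Eu (INR k * a)) = RtoC 0.
Proof.
  intros H1 H2.
  assert (T : forall n, Cmult (Cminus (Eu a) (RtoC 1)) (csum n (fun k => Eu (INR k * a))) = Cminus (Eu (INR n * a)) (RtoC 1)).
  { induction n. simpl. rewrite Rmult_0_l, Eu_0. ring.
    simpl csum. rewrite Cmult_plus_distr_l, IHn.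
    replace (Eu (INR (S n) * a)) with (Cmult (Eu a) (Eu (INR n * a))). ring.
    rewrite Eu_mult. f_equal. rewrite S_INR; ring. }
  specialize (T m). rewrite H2 in T. replace (Cminus (RtoC 1) (RtoC 1)) with (RtoC 0) in T by ring.
  destruct (classic (csum m (fun k => Eu (INR k * a)) = RtoC 0)) as [?|Hn]; auto. exfalso.
  assert (Cminus (Eu a) (RtoC 1) <> RtoC 0).
  { intro T'. apply H1. replace (Eu a) with (Cplus (Cminus (Eu a) (RtoC 1)) (RtoC 1)) by ring. rewrite T'. ring. }
  exact (Cmult_neq_0 _ _ H Hn T).
Qed.

Lemma Eu_nat (n : nat) : Eu (2 * PI * INR n) = RtoC 1.
Proof.
  unfold Eu. replace (2 * PI * INR n) with (0 + 2 * INR n * PI) by ring.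
  rewrite cos_period, sin_period, cos_0, sin_0. reflexivity.
Qed.
Lemma Eu_int2 (i j : nat) : Eu (2 * PI * (INR i - INR j)) = RtoC 1.
Proof.
  replace (2 * PI * (INR i - INR j)) with (2 * PI * INR i + - (2 * PI * INR j)) by ring.
  rewrite <- Eu_mult, Eu_nat. unfold Eu. rewrite cos_neg, sin_neg.
  pose proof (Eu_nat j) as E. unfold Eu in E. injection E as E1 E2. rewrite E1, E2.
  apply injective_projections; simpl; ring.
Qed.

Lemma Eu_ne1 a : 0 < Rabs a < 2 * PI -> Eu a <> RtoC 1.
Proof.
  intros [H1 H2] E. unfold Eu in E. injection E as Ec Es.
  pose proof PI_RGT_0.
  destruct (Rle_or_lt 0 a).
  - rewrite Rabs_right in * by lra.
    destruct (Rlt_or_le a PI). pose proof (sin_gt_0 a ltac:(lra) H3). lra.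
    destruct H3. pose proof (sin_lt_0 a H3 ltac:(lra)). lra.
    subst. rewrite cos_PI in Ec. lra.
  - rewrite Rabs_left in * by lra.
    destruct (Rlt_or_le (-a) PI). pose proof (sin_gt_0 (-a) ltac:(lra) H3). rewrite sin_neg in H4. lra.
    destruct H3. pose proof (sin_lt_0 (-a) H3 ltac:(lra)). rewrite sin_neg in H4. lra.
    replace a with (- PI) in Ec by lra. rewrite cos_neg, cos_PI in Ec. lra.
Qed.

Lemma sum_Eu_delta m i j : (0 < m)%nat -> (i < m)%nat -> (j < m)%nat ->
  csum m (fun k => Eu (INR k * (2 * PI * (INR i - INR j) / INR m))) =
  if Nat.eqb i j then RtoC (INR m) else RtoC 0.
Proof.
  intros Hm Hi Hj. pose proof PI_RGT_0. assert (0 < INR m) by (apply lt_0_INR; lia).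
  destruct (Nat.eqb_spec i j).
  - subst. replace (fun k => Eu (INR k * (2 * PI * (INR j - INR j) / INR m))) with (fun _ : nat => RtoC 1).
    clear. induction m. reflexivity. simpl csum. rewrite IHm, S_INR. apply injective_projections; simpl; ring.
    apply functional_extensionality; intros. rewrite <- Eu_0. f_equal. field. lra.
  - apply geom_Eu.
    + apply Eu_ne1. assert (INR i <> INR j) by (intro E; apply INR_eq in E; auto).
      assert (INR i < INR m) by (apply lt_INR; auto). assert (INR j < INR m) by (apply lt_INR; auto).
      pose proof (pos_INR i). pose proof (pos_INR j).
      unfold Rdiv. rewrite Rabs_mult, Rabs_mult, Rabs_right with (r := 2 * PI) by lra.
      rewrite Rabs_right with (r := / INR m) by (left; apply Rinv_0_lt_compat; lra).
      split.
      * apply Rmult_lt_0_compat; [|apply Rinv_0_lt_compat; lra]. apply Rmult_lt_0_compat. lra.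
        apply Rabs_pos_lt. lra.
      * apply (Rmult_lt_reg_r (INR m)); auto. rewrite Rmult_assoc, Rinv_l by lra.
        rewrite Rmult_1_r. apply Rmult_lt_compat_l. lra. apply Rabs_def1; lra.
    + replace (INR m * (2 * PI * (INR i - INR j) / INR m)) with (2 * PI * (INR i - INR j)).
      apply Eu_int2. field. lra.
Qed.

Definition DFT (m : nat) (p : C -> C) (j : nat) (rho : R) : C :=
  Cmult (RtoC (/ INR m)) (csum m (fun k => Cmult (Eu (- (INR j * (INR k * (2 * PI / INR m)))))
     (p (Cmult (RtoC rho) (Eu (INR k * (2 * PI / INR m))))))).

Lemma csum_delta n j (a : nat -> C) :
  csum n (fun i => if Nat.eqb i j then a i else RtoC 0) = if Nat.ltb j n then a j else RtoC 0.
Proof.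
  induction n; simpl. reflexivity. rewrite IHn.
  destruct (Nat.eqb_spec n j); destruct (Nat.ltb_spec j n); destruct (Nat.ltb_spec j (S n)); try lia; subst; ring.
Qed.

Lemma DFT_poly m p (c : nat -> C) n j rho : (0 < m)%nat -> (n <= m)%nat -> (j < m)%nat ->
  (forall mu, p mu = csum n (fun i => Cmult (c i) (Cpow mu i))) ->
  DFT m p j rho = Cmult (if Nat.ltb j n then c j else RtoC 0) (RtoC (rho ^ j)).
Proof.
  intros Hm Hn Hj Hp. unfold DFT. pose proof PI_RGT_0. assert (0 < INR m) by (apply lt_0_INR; lia).
  transitivity (Cmult (RtoC (/ INR m)) (csum m (fun k => csum n (fun i =>
     Cmult (Cmult (c i) (RtoC (rho ^ i))) (Eu (INR k * (2 * PI * (INR i - INR j) / INR m))))))).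
  { f_equal. apply csum_ext; intros k Hk. rewrite Hp, <- csum_scal. apply csum_ext; intros i Hi.
    rewrite Cpow_mult, Eu_pow, Cpow_RtoC.
    replace (Eu (INR k * (2 * PI * (INR i - INR j) / INR m))) with
      (Cmult (Eu (- (INR j * (INR k * (2 * PI / INR m))))) (Eu (INR i * (INR k * (2 * PI / INR m))))).
    ring. rewrite Eu_mult. f_equal. field. lra. }
  rewrite csum_swap.
  transitivity (Cmult (RtoC (/ INR m)) (csum n (fun i => if Nat.eqb i j then Cmult (Cmult (c i) (RtoC (rho ^ i))) (RtoC (INR m)) else RtoC 0))).
  { f_equal. apply csum_ext; intros i Hi. rewrite csum_scal, sum_Eu_delta by lia.
    destruct (Nat.eqb i j); ring. }
  rewrite csum_delta. destruct (Nat.ltb_spec j n).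
  - replace (RtoC (/ INR m)) with (Cinv (RtoC (INR m))). field.
    intro E. injection E. lra. unfold Cinv. simpl. apply injective_projections; simpl; field; lra.
  - ring.
Qed.

Lemma DFT_bound m p j rho eta : (0 < m)%nat -> 0 <= rho ->
  (forall mu, Cmod mu = rho -> Cmod (p mu) <= eta) -> Cmod (DFT m p j rho) <= eta.
Proof.
  intros Hm Hr H. unfold DFT. assert (0 < INR m) by (apply lt_0_INR; lia).
  rewrite Cmod_mult, Cmod_R, Rabs_right by (left; apply Rinv_0_lt_compat; lra).
  apply (Rmult_le_reg_l (INR m)); auto. rewrite <- Rmult_assoc, Rinv_r, Rmult_1_l by lra.
  eapply Rle_trans. apply csum_norm. rewrite Rmult_comm, <- rsum_const. apply rsum_le. intros k Hk.
  rewrite Cmod_mult, Eu_mod, Rmult_1_l. apply H. rewrite Cmod_mult, Eu_mod, Cmod_R, Rabs_right; lra.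
Qed.

Lemma DFT_sub m p q j rho : DFT m (fun mu => Cminus (p mu) (q mu)) j rho = Cminus (DFT m p j rho) (DFT m q j rho).
Proof.
  unfold DFT. unfold Cminus. rewrite <- (Cmult_1_l (csum m (fun k => Cmult _ (q _)))).
  replace (Copp (Cmult (RtoC (/ INR m)) (Cmult (RtoC 1) (csum m (fun k => Cmult (Eu (- (INR j * (INR k * (2 * PI / INR m))))) (q (Cmult (RtoC rho) (Eu (INR k * (2 * PI / INR m)))))))))) with
   (Cmult (RtoC (/ INR m)) (csum m (fun k => Cmult (RtoC (-1)) (Cmult (Eu (- (INR j * (INR k * (2 * PI / INR m))))) (q (Cmult (RtoC rho) (Eu (INR k * (2 * PI / INR m))))))))).
  rewrite <- Cmult_plus_distr_l, <- csum_add. f_equal. apply csum_ext; intros. 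
  replace (RtoC (-1)) with (Copp (RtoC 1)) by (apply injective_projections; simpl; ring). ring.
  rewrite csum_scal. replace (RtoC (-1)) with (Copp (RtoC 1)) by (apply injective_projections; simpl; ring). ring.
Qed.

Lemma CE (c : nat -> C) n (p : C -> C) rho eta : 0 < rho ->
  (forall mu, p mu = csum n (fun i => Cmult (c i) (Cpow mu i))) ->
  (forall mu, Cmod mu = rho -> Cmod (p mu) <= eta) ->
  forall j, (j < n)%nat -> Cmod (c j) * rho ^ j <= eta.
Proof.
  intros Hr Hp Hb j Hj.
  pose proof (DFT_poly n p c n j rho ltac:(lia) ltac:(lia) Hj Hp) as E.
  destruct (Nat.ltb_spec j n); try lia.
  pose proof (DFT_bound n p j rho eta ltac:(lia) ltac:(lra) Hb). rewrite E, Cmod_mult, Cmod_R, Rabs_right in H0; auto.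
  apply Rle_ge, pow_le; lra.
Qed.

Lemma zorn_prop (T : Type) (t0 : T) (R : T -> T -> Prop) :
  (forall t, R t t) -> (forall r s t, R r s -> R s t -> R r t) ->
  (forall A : T -> Prop, (forall s t, A s -> A t -> R s t \/ R t s) -> exists t, forall s, A s -> R s t) ->
  exists t, forall s, R t s -> R s t.
Proof.
  intros Hr Ht Hc.
  pose proof (@classical_sets.ZL_preorder T t0 (fun a b => boolp.asbool (R a b))) as Z.
  cbv beta in Z. 
  destruct Z as [t Hm].
  - intros t. apply boolp.asboolT. auto.
  - intros r s t H1 H2. apply boolp.asboolT. apply boolp.asboolW in H1. apply boolp.asboolW in H2. eauto.
  - intros A HA. destruct (Hc A) as [t Ht'].
    + intros s t As At. destruct (HA s t As At) as [h|h]; apply boolp.asboolW in h; auto.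
    + exists t. intros s As. apply boolp.asboolT; auto.
  - exists t. intros s Hs. apply boolp.asboolW. apply Hm. apply boolp.asboolT; auto.
Qed.

Section HB.
Variable X : CBanach.
Definition rs (t : R) (x : X) : X := vscal (RtoC t) x.

Lemma RtoC_plus a b : RtoC (a + b) = Cplus (RtoC a) (RtoC b).
Proof. apply injective_projections; simpl; ring. Qed.
Lemma RtoC_mult a b : RtoC (a * b) = Cmult (RtoC a) (RtoC b).
Proof. apply injective_projections; simpl; ring. Qed.
Lemma rs_adds a b x : rs (a + b) x = vadd (rs a x) (rs b x).
Proof. unfold rs. rewrite RtoC_plus. apply vscal_addC. Qed.
Lemma rs_addv a x y : rs a (vadd x y) = vadd (rs a x) (rs a y).
Proof. apply vscal_distr_v. Qed.
Lemma rs_assoc a b x : rs a (rs b x) = rs (a * b) x.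
Proof. unfold rs. rewrite vscal_assocC, RtoC_mult; auto. Qed.
Lemma rs_1 x : rs 1 x = x.
Proof. apply vscal_1C. Qed.
Lemma rs_0 x : rs 0 x = vzero.
Proof. apply vscal_0. Qed.
Lemma rs_norm a x : vnorm (rs a x) = Rabs a * vnorm x.
Proof. apply vnorm_scalR. Qed.
Lemma rs_m1 x : rs (-1) x = vopp x.
Proof. apply vscal_m1. Qed.
Lemma vadd_4 (a b c d : X) : vadd (vadd a b) (vadd c d) = vadd (vadd a c) (vadd b d).
Proof.
  rewrite !vadd_assoc. f_equal. rewrite <- !vadd_assoc. f_equal. apply vadd_comm.
Qed.

Lemma group_swap (a b c d : X) : vadd a b = vadd c d -> vadd c (vopp a) = vadd b (vopp d).
Proof.
  intros E. transitivity (vadd (vadd (vadd c d) (vopp d)) (vopp a)).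
  - rewrite <- (vadd_assoc _ c d), vadd_oppr, vadd_0r. auto.
  - rewrite <- E. rewrite (vadd_comm _ _ (vopp a)), (vadd_assoc _ (vopp a)), (vadd_assoc _ (vopp a)), vadd_oppl, vadd_0l. auto.
Qed.

Variable x1 : X.
Hypothesis Hx1 : x1 <> vzero.

Definition good (G : X -> R -> Prop) :=
  (forall x s y t, G x s -> G y t -> G (vadd x y) (s + t)) /\
  (forall a x s, G x s -> G (rs a x) (a * s)) /\
  (forall x s t, G x s -> G x t -> s = t) /\
  (forall x s, G x s -> s <= vnorm x) /\
  G x1 (vnorm x1).

Lemma good_zero G : good G -> G vzero 0.
Proof.
  intros [_ [Hs [_ [_ H1]]]]. pose proof (Hs 0 _ _ H1). rewrite rs_0, Rmult_0_l in H. auto.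
Qed.

Definition G0 (x : X) (s : R) := exists a, x = rs a x1 /\ s = a * vnorm x1.

Lemma G0_good : good G0.
Proof.
  pose proof (vnorm_pos _ _ Hx1) as Hp.
  split; [|split; [|split; [|split]]].
  - intros x s y t [a [-> ->]] [b [-> ->]]. exists (a + b). rewrite rs_adds. split; auto; ring.
  - intros c x s [a [-> ->]]. exists (c * a). rewrite rs_assoc. split; auto; ring.
  - intros x s t [a [-> ->]] [b [E ->]].
    assert (vnorm (rs (a - b) x1) = 0).
    { replace (a - b) with (a + -1 * b) by ring. rewrite rs_adds, <- rs_assoc, rs_m1, <- E, vadd_oppr. apply vnorm_zero. }
    rewrite rs_norm in H. assert (a - b = 0). { destruct (Req_dec (a - b) 0); auto. 
      assert (0 < Rabs (a - b)) by (apply Rabs_pos_lt; auto). nra. }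
    assert (a = b) by lra. subst; auto.
  - intros x s [a [-> ->]]. rewrite rs_norm. pose proof (Rle_abs a). nra.
  - exists 1. rewrite rs_1. split; auto; ring.
Qed.

Definition GT := { G : X -> R -> Prop | good G }.
Definition Rle_G (A B : GT) := forall x s, proj1_sig A x s -> proj1_sig B x s.

Lemma chain_ub (Ac : GT -> Prop) : (forall s t, Ac s -> Ac t -> Rle_G s t \/ Rle_G t s) ->
  exists t, forall s, Ac s -> Rle_G s t.
Proof.
  intros Htot. destruct (classic (exists G, Ac G)) as [[G0' HG0]|Hne].
  - set (U := fun x s => exists G, Ac G /\ proj1_sig G x s).
    assert (HU : good U).
    { split; [|split; [|split; [|split]]].
      - intros x s y t [Ga [Ha Hxa]] [Gb [Hb Hyb]]. destruct (Htot Ga Gb Ha Hb) as [h|h].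
        + exists Gb. split; auto. apply (proj1 (proj2_sig Gb)); auto.
        + exists Ga. split; auto. apply (proj1 (proj2_sig Ga)); auto.
      - intros a x s [Ga [Ha Hxa]]. exists Ga. split; auto. apply (proj1 (proj2 (proj2_sig Ga))); auto.
      - intros x s t [Ga [Ha Hxa]] [Gb [Hb Hyb]]. destruct (Htot Ga Gb Ha Hb) as [h|h].
        + apply (proj1 (proj2 (proj2 (proj2_sig Gb))) x); auto.
        + apply (proj1 (proj2 (proj2 (proj2_sig Ga))) x); auto.
      - intros x s [Ga [Ha Hxa]]. apply (proj1 (proj2 (proj2 (proj2 (proj2_sig Ga))))); auto.
      - exists G0'. split; auto. apply (proj2 (proj2 (proj2 (proj2 (proj2_sig G0'))))). }
    exists (exist _ U HU). intros s Hs x t Hxt. simpl. exists s; auto.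
  - exists (exist _ G0 G0_good). intros s Hs. exfalso; apply Hne; eauto.
Qed.

Lemma extend (M : X -> R -> Prop) (x : X) : good M -> (forall s, ~ M x s) ->
  exists c, good (fun z t => exists u s a, M u s /\ z = vadd u (rs a x) /\ t = s + a * c).
Proof.
  intros HM Hx. destruct HM as [Hadd [Hsc [Hfun [Hdom H1]]]].
  assert (HM : good M) by (repeat split; auto).
  pose proof (good_zero M HM) as M00.
  set (Lset := fun r => exists v s, M v s /\ r = s - vnorm (vsub v x)).
  assert (Hle : forall v s w t, M v s -> M w t -> s - vnorm (vsub v x) <= vnorm (vadd w x) - t).
  { intros v s w t Hv Hw. pose proof (Hdom _ _ (Hadd _ _ _ _ Hv Hw)).
    pose proof (vnorm_triangle _ (vsub v x) (vadd w x)).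
    replace (vadd (vsub v x) (vadd w x)) with (vadd v w) in H0.
    lra. unfold vsub. rewrite vadd_4, vadd_oppl, vadd_0r. reflexivity. }
  destruct (completeness Lset) as [c [Hub Hlub]].
  { exists (vnorm (vadd vzero x) - 0). intros r [v [s [Hv ->]]]. apply Hle; auto. }
  { exists (0 - vnorm (vsub vzero x)). exists vzero, 0. auto. }
  assert (Hc1 : forall v s, M v s -> s - vnorm (vsub v x) <= c).
  { intros v s Hv. apply Hub. exists v, s; auto. }
  assert (Hc2 : forall w t, M w t -> c <= vnorm (vadd w x) - t).
  { intros w t Hw. apply Hlub. intros r [v [s [Hv ->]]]. apply Hle; auto. }
  exists c. split; [|split; [|split; [|split]]].
  - intros z1 t1 z2 t2 [u1 [s1 [a1 [H1u [-> ->]]]]] [u2 [s2 [a2 [H2u [-> ->]]]]].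
    exists (vadd u1 u2), (s1 + s2), (a1 + a2). split; auto. split. rewrite rs_adds. apply vadd_4. ring.
  - intros b z t [u [s [a [Hu [-> ->]]]]]. exists (rs b u), (b * s), (b * a). split; auto. split.
    rewrite rs_addv, rs_assoc; auto. ring.
  - intros z t1 t2 [u1 [s1 [a1 [H1u [-> ->]]]]] [u2 [s2 [a2 [H2u [E ->]]]]].
    destruct (Req_dec a1 a2) as [Ea|Na].
    + subst a2. assert (u1 = u2).
      { apply (f_equal (fun z => vadd z (vopp (rs a1 x)))) in E. rewrite <- !vadd_assoc, !vadd_oppr, !vadd_0r in E. auto. }
      subst. rewrite (Hfun _ _ _ H1u H2u). auto.
    + exfalso. apply (Hx ((/ (a1 - a2)) * (s2 + (-1) * s1))).
      replace x with (rs (/ (a1 - a2)) (vadd u2 (rs (-1) u1))).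
      apply Hsc, Hadd; auto.
      assert (vadd u2 (rs (-1) u1) = rs (a1 - a2) x).
      { rewrite rs_m1. apply group_swap in E. rewrite E.
        replace (a1 - a2) with (a1 + -1 * a2) by ring. rewrite rs_adds, <- rs_assoc, rs_m1. auto. }
      rewrite H, rs_assoc, Rinv_l, rs_1; auto. lra.
  - intros z t [u [s [a [Hu [-> ->]]]]].
    destruct (Rtotal_order a 0) as [Hneg|[Hz|Hpos]].
    + set (b := - a). assert (0 < b) by (unfold b; lra).
      pose proof (Hc1 (rs (/ b) u) (/ b * s) (Hsc _ _ _ Hu)) as Hc.
      assert (E : vnorm (vsub (rs (/ b) u) x) * b = vnorm (vadd u (rs a x))).
      { rewrite Rmult_comm. rewrite <- (Rabs_right b) at 1 by lra. rewrite <- rs_norm. f_equal.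
        unfold vsub. rewrite rs_addv, rs_assoc, Rinv_r, rs_1 by lra. f_equal.
        rewrite <- rs_m1, rs_assoc. f_equal. unfold b; ring. }
      apply (Rmult_le_compat_r b) in Hc; [|lra].
      replace ((/ b * s - vnorm (vsub (rs (/ b) u) x)) * b) with (s - vnorm (vsub (rs (/ b) u) x) * b) in Hc
        by (field; lra).
      rewrite E in Hc. unfold b in Hc. nra.
    + subst. rewrite rs_0, vadd_0r, Rmult_0_l, Rplus_0_r. auto.
    + pose proof (Hc2 (rs (/ a) u) (/ a * s) (Hsc _ _ _ Hu)) as Hc.
      assert (E : vnorm (vadd (rs (/ a) u) x) * a = vnorm (vadd u (rs a x))).
      { rewrite Rmult_comm. rewrite <- (Rabs_right a) at 1 by lra. rewrite <- rs_norm. f_equal.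
        rewrite rs_addv, rs_assoc, Rinv_r, rs_1 by lra. reflexivity. }
      apply (Rmult_le_compat_r a) in Hc; [|lra].
      replace ((vnorm (vadd (rs (/ a) u) x) - / a * s) * a) with (vnorm (vadd (rs (/ a) u) x) * a - s) in Hc
        by (field; lra).
      rewrite E in Hc. lra.
  - exists x1, (vnorm x1), 0. split; auto. split. rewrite rs_0, vadd_0r; auto. ring.
Qed.

Lemma real_HB : exists u : X -> R,
  (forall x y, u (vadd x y) = u x + u y) /\ (forall a x, u (rs a x) = a * u x) /\
  (forall x, u x <= vnorm x) /\ u x1 = vnorm x1.
Proof.
  destruct (zorn_prop GT (exist _ G0 G0_good) Rle_G) as [[M HM] Hmax].
  - intros t x s; auto.
  - intros r s t H1 H2 x v H; auto.
  - apply chain_ub.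
  - assert (Htot : forall x, exists s, M x s).
    { intros x. apply NNPP. intro Hn. assert (Hx : forall s, ~ M x s) by (intros s Hs; apply Hn; eauto).
      destruct (extend M x HM Hx) as [c Hc].
      specialize (Hmax (exist _ _ Hc)). simpl in Hmax.
      assert (Rle_G (exist _ M HM) (exist _ _ Hc)).
      { intros z t Hz. simpl in *. exists z, t, 0. split; auto. split. rewrite rs_0, vadd_0r; auto. ring. }
      specialize (Hmax H x c). simpl in Hmax. apply (Hx c). apply Hmax.
      exists vzero, 0, 1. split. apply good_zero; auto. split. rewrite rs_1, vadd_0l; auto. ring. }
    set (u := fun x => proj1_sig (constructive_indefinite_description _ (Htot x))).
    assert (Hu : forall x, M x (u x)) by (intros x; unfold u; destruct constructive_indefinite_description; auto).
    destruct HM as [Hadd [Hsc [Hfun [Hdom H1]]]].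
    exists u. split; [|split; [|split]].
    + intros x y. apply (Hfun (vadd x y)); auto.
    + intros a x. apply (Hfun (rs a x)); auto.
    + intros x; auto.
    + apply (Hfun x1); auto.
Qed.
End HB.

Lemma complex_HB (X : CBanach) (x1 : X) : x1 <> vzero ->
  exists (phi : X -> Defs.C) (x0 : X), in_dual phi /\ phi x0 = Defs.C1 /\ vnorm x0 <= 1 /\
    forall x, Cmod (phi x) <= vnorm x.
Proof.
  intros Hx1. destruct (real_HB X x1 Hx1) as [u [Ua [Us [Ub U1]]]].
  set (phi := fun x : X => (u x, - u (vscal Ci x)) : C).
  assert (Udec : forall p q x, u (vscal (p, q) x) = p * u x + q * u (vscal Ci x)).
  { intros p q x. replace (p, q) with (Cplus (RtoC p) (Cmult (RtoC q) Ci)) by (apply injective_projections; simpl; ring).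
    rewrite vscal_addC, <- vscal_assocC, Ua. unfold rs in Us. rewrite !Us. reflexivity. }
  assert (Hlin : forall a x, phi (vscal a x) = Cmult a (phi x)).
  { intros [p q] x. unfold phi. rewrite Udec, vscal_assocC.
    replace (Cmult Ci (p, q)) with ((-q, p) : C) by (apply injective_projections; simpl; ring).
    rewrite Udec. apply injective_projections; simpl; ring. }
  assert (Hadd : forall x y, phi (vadd x y) = Cplus (phi x) (phi y)).
  { intros x y. unfold phi. rewrite vscal_distr_v, !Ua. apply injective_projections; simpl; ring. }
  assert (Hbd : forall x, Cmod (phi x) <= vnorm x).
  { intros x. destruct (classic (phi x = RtoC 0)) as [Z|NZ].
    - rewrite Z, Cmod_0. apply vnorm_ge0.
    - assert (Hm : 0 < Cmod (phi x)) by (destruct (Cmod_ge_0 (phi x)) as [h|h]; auto; symmetry in h; apply Cmod_eq_0 in h; contradiction).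
      set (w := Cmult (Cconj (phi x)) (RtoC (/ Cmod (phi x)))).
      assert (Hw : Cmult w (phi x) = RtoC (Cmod (phi x))).
      { unfold w. replace (Cmult (Cmult (Cconj (phi x)) (RtoC (/ Cmod (phi x)))) (phi x)) with
          (Cmult (Cmult (phi x) (Cconj (phi x))) (RtoC (/ Cmod (phi x)))) by ring.
        rewrite <- Cmod2_conj. apply injective_projections; simpl; field; lra. }
      assert (Hwm : Cmod w = 1).
      { unfold w. rewrite Cmod_mult, Cmod_conj, Cmod_R, Rabs_right. field; lra. left; apply Rinv_0_lt_compat; auto. }
      pose proof (Ub (vscal w x)). rewrite vnorm_scal in H. cnorm. rewrite Hwm, Rmult_1_l in H.
      assert (u (vscal w x) = Cmod (phi x)).
      { change (u (vscal w x)) with (fst (phi (vscal w x))). rewrite Hlin, Hw. reflexivity. }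
      lra. }
  assert (Hdual : in_dual phi).
  { split; [|split]. intros; cnorm; apply Hadd. intros; cnorm; apply Hlin. exists 1. intros x. cnorm. rewrite Rmult_1_l. apply Hbd. }
  assert (Hp1 : vnorm x1 <= Cmod (phi x1)).
  { pose proof (re_le_Cmod (phi x1)). unfold Re, phi in H. simpl in H. rewrite Rabs_right in H. rewrite <- U1. exact H.
    rewrite U1. apply Rle_ge, vnorm_ge0. }
  pose proof (vnorm_pos _ _ Hx1) as Hpos.
  assert (NZ : phi x1 <> RtoC 0) by (intro E; rewrite E, Cmod_0 in Hp1; lra).
  exists phi, (vscal (Cinv (phi x1)) x1). split; auto. split; [|split]; auto.
  - cnorm. rewrite Hlin. apply Cinv_l; auto.
  - rewrite vnorm_scal. cnorm. rewrite Cmod_inv by auto.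
    apply (Rmult_le_reg_l (Cmod (phi x1))). lra. rewrite <- Rmult_assoc, Rinv_r by lra. lra.
Qed.

Lemma Au_comp_lin {X Y : CBanach} (f : Y -> Defs.C) (L : X -> Y) :
  Defs.is_linear L -> (forall x, vnorm (L x) <= vnorm x) -> in_Au f -> in_Au (fun x => f (L x)).
Proof.
  intros HL Hn [[B HB] [Hh Hu]]. unfold inBall in *.
  split; [|split].
  - exists B. intros x Hx. apply HB. unfold inBall in *. pose proof (Hn x). lra.
  - intros x Hx. destruct (Hh (L x)) as [Lf [HLf Hest]]. unfold inBall in *. pose proof (Hn x); lra.
    exists (fun h => Lf (L h)). split.
    + apply dual_comp; auto. exists 1. intros; rewrite Rmult_1_l; auto.
    + intros eps Heps. destruct (Hest eps Heps) as [d [Hd Hd2]]. exists d. split; auto.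
      intros h Hh'. rewrite (proj1 HL). eapply Rle_trans. apply Hd2. pose proof (Hn h); lra.
      apply Rmult_le_compat_l; auto; lra.
  - intros eps Heps. destruct (Hu eps Heps) as [d [Hd Hd2]]. exists d. split; auto.
    intros x y Hx Hy Hxy. apply Hd2; unfold inBall in *; try (pose proof (Hn x); pose proof (Hn y); lra).
    rewrite <- lin_sub by auto. pose proof (Hn (vsub x y)). lra.
Qed.

Lemma lin_scal_comp {X Y : CBanach} (a : C) (L : X -> Y) : Defs.is_linear L -> Defs.is_linear (fun x => vscal a (L x)).
Proof.
  intros [Ha Hs]. split.
  - intros x y. rewrite Ha, vscal_distr_v; auto.
  - intros b x. rewrite Hs, !vscal_assocC. f_equal. cnorm. ring.
Qed.
Lemma bounded_scal_comp {X Y : CBanach} (a : C) (L : X -> Y) : Defs.is_bounded_op L -> Defs.is_bounded_op (fun x => vscal a (L x)).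
Proof.
  intros HB. destruct (bounded_pos L HB) as [K [HK HK2]]. exists (Cmod a * K). intros x.
  rewrite vnorm_scal. cnorm. rewrite Rmult_assoc. apply Rmult_le_compat_l. apply Cmod_ge_0. auto.
Qed.

Lemma A_to_Au (X Y : CBanach) (T : Y -> X) (S : X -> Y) :
  Au_eq_A X -> Defs.is_linear T -> Defs.is_bounded_op T -> Defs.is_linear S -> Defs.is_bounded_op S ->
  (forall y, S (T y) = y) -> forall f : Y -> Defs.C, in_A f -> in_Au f.
Proof.
  intros HX HlT HbT HlS HbS ST f Hf.
  split; [|split].
  - destruct (Hf 1 ltac:(lra)) as [P [HP HfP]]. destruct (ftp_ball P HP) as [Bd [L [? [? [Hb Hl]]]]].
    exists (1 + Bd). intros y Hy. specialize (HfP y Hy). specialize (Hb y Hy). cnorm.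
    replace (f y) with (Cplus (Cminus (f y) (P y)) (P y)) by ring.
    eapply Rle_trans. apply Cmod_triangle. lra.
  - intros y0 Hy0. unfold inBall in Hy0.
    set (d := (1 - vnorm y0) / 2). assert (Hd : 0 < d) by (unfold d; lra).
    destruct (bounded_pos S HbS) as [KS [HKS HS]]. destruct (bounded_pos T HbT) as [KT [HKT HT]].
    set (c := d / KS). assert (Hc : 0 < c) by (unfold c; apply Rdiv_lt_0_compat; lra).
    set (g := fun x => f (vadd y0 (vscal (RtoC c) (S x)))).
    assert (HgA : in_A g).
    { intros eps Heps. destruct (Hf eps Heps) as [P [HP HfP]].
      exists (fun x => P (vadd y0 (vscal (RtoC c) (S x)))). split.
      - apply ftp_comp_affine; auto. apply lin_scal_comp; auto. apply bounded_scal_comp; auto.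
      - intros x Hx. apply HfP. unfold inBall in *. eapply Rle_lt_trans. apply vnorm_triangle.
        rewrite vnorm_scalR, Rabs_right by lra. pose proof (HS x). pose proof (vnorm_ge0 _ x).
        assert (c * vnorm (S x) <= c * (KS * vnorm x)) by (apply Rmult_le_compat_l; lra).
        assert (c * (KS * vnorm x) < d). { unfold c. replace (d / KS * (KS * vnorm x)) with (d * vnorm x) by (field; lra). nra. }
        unfold d in *. lra. }
    apply HX in HgA. destruct HgA as [_ [Hgh _]].
    destruct (Hgh vzero) as [L0 [HL0 Hest]]. unfold inBall in *; rewrite vnorm_zero; lra.
    set (Lt := fun h => vscal (RtoC (/ c)) (T h)).
    assert (HLt : Defs.is_linear Lt) by (apply lin_scal_comp; auto).
    exists (fun h => L0 (Lt h)). split.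
    + apply dual_comp; auto. apply bounded_scal_comp; auto.
    + intros eps Heps. assert (He' : 0 < eps * c / KT) by (apply Rdiv_lt_0_compat; [apply Rmult_lt_0_compat|]; lra).
      destruct (Hest _ He') as [d0 [Hd0 Hd0']]. exists (d0 * c / KT). split.
      { apply Rdiv_lt_0_compat; [apply Rmult_lt_0_compat|]; lra. }
      intros h Hh.
      assert (Hn : vnorm (Lt h) <= / c * KT * vnorm h).
      { unfold Lt. rewrite vnorm_scalR, Rabs_right. rewrite Rmult_assoc. apply Rmult_le_compat_l; auto.
        left; apply Rinv_0_lt_compat; lra. left; apply Rinv_0_lt_compat; lra. }
      assert (Hn2 : vnorm (Lt h) < d0).
      { eapply Rle_lt_trans. apply Hn. apply (Rmult_lt_reg_l (c / KT)). apply Rdiv_lt_0_compat; lra.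
        replace (c / KT * (/ c * KT * vnorm h)) with (vnorm h) by (field; lra).
        replace (c / KT * d0) with (d0 * c / KT) by (field; lra). auto. }
      specialize (Hd0' (Lt h) Hn2). unfold g in Hd0'.
      rewrite vadd_0l, (lin_zero S), vscal_zero, vadd_0r in Hd0' by auto.
      assert (E : vscal (RtoC c) (S (Lt h)) = h).
      { unfold Lt. rewrite (proj2 HlS), ST, vscal_assocC.
        replace (Cmult (RtoC c) (RtoC (/ c))) with (RtoC 1). apply vscal_1C.
        apply injective_projections; simpl; field; lra. }
      rewrite E in Hd0'. eapply Rle_trans. apply Hd0'.
      pose proof (vnorm_ge0 _ (Lt h)). pose proof (vnorm_ge0 _ h).
      assert (eps * c / KT * vnorm (Lt h) <= eps * c / KT * (/ c * KT * vnorm h)) by (apply Rmult_le_compat_l; lra).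
      replace (eps * c / KT * (/ c * KT * vnorm h)) with (eps * vnorm h) in H1 by (field; lra). lra.
  - intros eps Heps. destruct (Hf (eps / 3) ltac:(lra)) as [P [HP HfP]].
    destruct (ftp_ball P HP) as [Bd [L [? [? [Hb Hl]]]]].
    exists (eps / 3 / (L + 1)). split. apply Rdiv_lt_0_compat; lra.
    intros x y Hx Hy Hxy. pose proof (HfP x Hx). pose proof (HfP y Hy). pose proof (Hl x y Hx Hy). cnorm.
    replace (Cminus (f x) (f y)) with (Cplus (Cminus (f x) (P x)) (Cplus (Cminus (P x) (P y)) (Copp (Cminus (f y) (P y))))) by ring.
    eapply Rle_lt_trans. apply Cmod_triangle. eapply Rle_lt_trans. apply Rplus_le_compat_l. apply Cmod_triangle.
    rewrite Cmod_opp.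
    assert (L * vnorm (vsub x y) <= L * (eps / 3 / (L + 1))) by (apply Rmult_le_compat_l; lra).
    assert (L * (eps / 3 / (L + 1)) < eps / 3). { apply (Rmult_lt_reg_r (L + 1)). lra.
      replace (L * (eps / 3 / (L + 1)) * (L + 1)) with (L * (eps / 3)) by (field; lra). nra. }
    lra.
Qed.

Lemma rsum_tail_eq q N n : q <> 1 ->
  rsum n (fun i => if Nat.ltb i N then 0 else q ^ i) = if Nat.leb n N then 0 else (q ^ N - q ^ n) / (1 - q).
Proof.
  intros Hq. induction n; simpl rsum.
  - destruct (Nat.leb_spec 0 N); try lia. reflexivity.
  - rewrite IHn. destruct (Nat.ltb_spec n N); destruct (Nat.leb_spec n N); destruct (Nat.leb_spec (S n) N); try lia.
    + lra.
    + assert (n = N) by lia. subst. simpl. field. lra.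
    + simpl. field. lra.
Qed.
Lemma geom_tail q N n : 0 <= q < 1 -> rsum n (fun i => if Nat.ltb i N then 0 else q ^ i) <= q ^ N / (1 - q).
Proof.
  intros Hq. rewrite rsum_tail_eq by lra. assert (0 <= q ^ N) by (apply pow_le; lra).
  destruct (Nat.leb n N). apply Rdiv_le_0_compat; lra.
  unfold Rdiv. apply Rmult_le_compat_r. left; apply Rinv_0_lt_compat; lra.
  assert (0 <= q ^ n) by (apply pow_le; lra). lra.
Qed.
Lemma rsum_scal n a F : rsum n (fun i => a * F i) = a * rsum n F.
Proof. induction n; simpl. ring. rewrite IHn. ring. Qed.
Lemma csum_split N n F : (N <= n)%nat ->
  Cminus (csum n F) (csum N F) = csum n (fun i => if Nat.ltb i N then RtoC 0 else F i).
Proof.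
  intros HN.
  assert (E1 : csum N F = csum n (fun i => if Nat.ltb i N then F i else RtoC 0)).
  { rewrite (csum_zero_tail N n); auto. apply csum_ext; intros i Hi. destruct (Nat.ltb_spec i N); lia || auto.
    intros i Hi. destruct (Nat.ltb_spec i N); try lia; auto. }
  assert (E2 : csum n F = Cplus (csum n (fun i => if Nat.ltb i N then F i else RtoC 0)) (csum n (fun i => if Nat.ltb i N then RtoC 0 else F i))).
  { rewrite <- csum_add. apply csum_ext; intros. destruct (Nat.ltb i N); ring. }
  rewrite E2, E1. ring.
Qed.

Lemma csum_sub n F G : Cminus (csum n F) (csum n G) = csum n (fun i => Cminus (F i) (G i)).
Proof. induction n; simpl. ring. rewrite <- IHn. ring. Qed.

Lemma Cmod_tri4 (a b c d : C) : Cmod (Cplus a (Cplus b (Cplus c d))) <= Cmod a + Cmod b + Cmod c + Cmod d.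
Proof.
  pose proof (Cmod_triangle a (Cplus b (Cplus c d))). pose proof (Cmod_triangle b (Cplus c d)).
  pose proof (Cmod_triangle c d). lra.
Qed.

Lemma lin_id {X : CBanach} : Defs.is_linear (fun x : X => x).
Proof. split; auto. Qed.
Lemma bounded_id {X : CBanach} : Defs.is_bounded_op (fun x : X => x).
Proof. exists 1. intros; lra. Qed.

Lemma ftp_DFT {X : CBanach} (Q : X -> Defs.C) m j rho : finite_type_poly Q ->
  finite_type_poly (fun x => DFT m (fun mu => Q (vscal mu x)) j rho).
Proof.
  intros HQ. unfold DFT. apply ftp_cmul.
  apply (ftp_csum m (fun k x => Cmult (Eu (- (INR j * (INR k * (2 * PI / INR m))))) (Q (vscal (Cmult (RtoC rho) (Eu (INR k * (2 * PI / INR m)))) x)))).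
  intros k _. apply ftp_cmul.
  apply (ftp_comp_lin (fun x => vscal (Cmult (RtoC rho) (Eu (INR k * (2 * PI / INR m)))) x) Q); auto.
  apply (lin_scal_comp _ (fun x => x)), lin_id. apply (bounded_scal_comp _ (fun x => x)), bounded_id.
Qed.

Lemma Au_to_A (X Y : CBanach) (T : Y -> X) (S : X -> Y) :
  Au_eq_A X -> Defs.is_linear T -> Defs.is_bounded_op T -> Defs.is_linear S -> Defs.is_bounded_op S ->
  (forall y, S (T y) = y) -> forall f : Y -> Defs.C, in_Au f -> in_A f.
Proof.
  intros HX HlT HbT HlS HbS ST f Hf.
  destruct (classic (exists x1 : X, x1 <> vzero)) as [[x1 Hx1]|Hall].
  2:{ assert (Hz : forall y : Y, y = vzero).
      { intros y. rewrite <- (ST y). assert (T y = vzero) by (apply NNPP; intro; apply Hall; eauto).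
        rewrite H. apply lin_zero; auto. }
      intros eps Heps. exists (fun _ => f vzero). split. apply ftp_const.
      intros x _. rewrite (Hz x). cnorm. replace (Cminus (f vzero) (f vzero)) with (RtoC 0) by ring. rewrite Cmod_0. lra. }
  destruct (complex_HB X x1 Hx1) as [phi [x0 [Hphi [Hx0 [Hx0n Hphib]]]]].
  pose proof Hf as Hf'. destruct Hf as [[B HB] [Hh Hu]].
  set (B1 := Rmax B 0). assert (HB1 : 0 <= B1) by apply Rmax_r.
  assert (HB' : forall y, inBall y -> Cmod (f y) <= B1).
  { intros y Hy. eapply Rle_trans. apply HB; auto. apply Rmax_l. }
  intros eps Heps.
  destruct (Hu (eps / 4) ltac:(lra)) as [dl [Hdl Hdl2]].
  set (r := 1 - Rmin (dl / 2) (1 / 2)).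
  assert (Hr : 1 / 2 <= r < 1 /\ 1 - r < dl).
  { unfold r. pose proof (Rmin_l (dl/2) (1/2)). pose proof (Rmin_r (dl/2) (1/2)).
    assert (0 < Rmin (dl / 2) (1 / 2)) by (apply Rmin_glb_lt; lra). lra. }
  set (rho := (1 + r) / 2). set (q := r / rho).
  assert (Hq : 0 <= q < 1).
  { unfold q, rho. split. apply Rdiv_le_0_compat; lra. apply (Rmult_lt_reg_r ((1 + r) / 2)). lra.
    unfold Rdiv at 1. rewrite Rmult_assoc, Rinv_l, Rmult_1_r by lra. lra. }
  destruct (pow_lt_1_zero q ltac:(rewrite Rabs_right; lra) (eps / 4 * (1 - q) / (B1 + 1)))
    as [N HN]. { apply Rdiv_lt_0_compat; [apply Rmult_lt_0_compat|]; lra. }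
  specialize (HN N (le_n N)). rewrite Rabs_right in HN by (apply Rle_ge, pow_le; lra).
  assert (HtailN : (B1 + 1) * (q ^ N / (1 - q)) < eps / 4).
  { apply (Rmult_lt_compat_l (B1 + 1)) in HN; [|lra].
    replace ((B1 + 1) * (eps / 4 * (1 - q) / (B1 + 1))) with (eps / 4 * (1 - q)) in HN by (field; lra).
    replace ((B1 + 1) * (q ^ N / (1 - q))) with ((B1 + 1) * q ^ N / (1 - q)) by (field; lra).
    apply (Rmult_lt_reg_r (1 - q)). lra. replace ((B1 + 1) * q ^ N / (1 - q) * (1 - q)) with ((B1 + 1) * q ^ N) by (field; lra). lra. }
  destruct (bounded_pos S HbS) as [KS [HKS HS]]. destruct (bounded_pos T HbT) as [KT [HKT HT]].
  set (c := / (KS * KT)).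
  assert (Hc : 0 < c <= 1).
  { unfold c. split. apply Rinv_0_lt_compat; nra. rewrite <- Rinv_1. apply Rinv_le_contravar; nra. }
  set (h := fun x => f (vscal (RtoC (/ KS)) (S x))).
  assert (HhAu : in_Au h).
  { apply (Au_comp_lin f (fun x => vscal (RtoC (/ KS)) (S x))); auto. apply lin_scal_comp; auto.
    intros x. rewrite vnorm_scalR, Rabs_right by (left; apply Rinv_0_lt_compat; lra).
    apply (Rmult_le_reg_l KS). lra. rewrite <- Rmult_assoc, Rinv_r, Rmult_1_l by lra. auto. }
  assert (HhA : in_A h) by (apply HX; auto).
  set (Cst := INR N * (2 / c) ^ N + 1).
  assert (HCst : 1 <= Cst). { unfold Cst. assert (0 <= INR N * (2/c)^N). apply Rmult_le_pos. apply pos_INR. apply pow_le.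
    apply Rdiv_le_0_compat; lra. lra. }
  set (eta := Rmin (eps / (8 * Cst)) 1).
  assert (Heta : 0 < eta /\ eta <= 1 /\ eta * (2 * Cst) <= eps / 4).
  { unfold eta. split. apply Rmin_glb_lt. apply Rdiv_lt_0_compat; lra. lra. split. apply Rmin_r.
    pose proof (Rmin_l (eps / (8 * Cst)) 1). apply (Rmult_le_compat_r (2 * Cst)) in H; [|lra].
    replace (eps / (8 * Cst) * (2 * Cst)) with (eps / 4) in H by (field; lra). auto. }
  destruct (HhA eta (proj1 Heta)) as [Q [HQ HQh]].
  destruct (ftp_poly Q HQ) as [nQ HnQ].
  set (m := Datatypes.S (Nat.max nQ N)).
  set (Hj := fun j x => DFT m (fun mu => Q (vscal mu x)) j 1).
  set (Lw := fun y : Y => vscal (RtoC (/ KT)) (T y)).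
  exists (fun y => csum N (fun j => Cmult (RtoC ((r / c) ^ j)) (Hj j (Lw y)))).
  split.
  { apply (ftp_csum N (fun j y => Cmult (RtoC ((r / c) ^ j)) (Hj j (Lw y)))). intros j _. apply ftp_cmul.
    apply (ftp_comp_lin Lw (Hj j)). apply lin_scal_comp; auto. apply bounded_scal_comp; auto.
    apply ftp_DFT; auto. }
  intros y Hy. unfold inBall in Hy.
  set (w := Lw y).
  assert (Hw : vnorm w <= vnorm y).
  { unfold w, Lw. rewrite vnorm_scalR, Rabs_right by (left; apply Rinv_0_lt_compat; lra).
    apply (Rmult_le_reg_l KT). lra. rewrite <- Rmult_assoc, Rinv_r, Rmult_1_l by lra. auto. }
  pose proof (vnorm_ge0 _ y) as Hy0.
  assert (HA : Cmod (Cminus (f y) (f (vscal (RtoC r) y))) < eps / 4).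
  { apply Hdl2; unfold inBall; auto. rewrite vnorm_scalR, Rabs_right by lra. nra.
    rewrite <- (vscal_1C _ y) at 1. rewrite vsub_add_scal, vnorm_scal. cnorm.
    replace (Cminus (RtoC 1) (RtoC r)) with (RtoC (1 - r)) by (apply injective_projections; simpl; ring).
    rewrite Cmod_R, Rabs_right by lra. nra. }
  set (gy := fun x => f (vscal (phi x) y)).
  assert (HgyAu : in_Au gy).
  { apply (Au_comp_lin f (fun x => vscal (phi x) y)); auto.
    - split. intros a b. rewrite (dual_add phi) by auto. apply vscal_addC.
      intros a x. rewrite (dual_scal phi) by auto. rewrite vscal_assocC; auto.
    - intros x. rewrite vnorm_scal. cnorm. pose proof (Hphib x). pose proof (vnorm_ge0 _ x).
      pose proof (Cmod_ge_0 (phi x)). nra. }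
  destruct (proj1 (HX gy) HgyAu eta (proj1 Heta)) as [Py [HPy HPyg]].
  destruct (ftp_poly Py HPy) as [np Hnp].
  set (n := Nat.max np N).
  destruct (IsPoly_mono _ _ n (Hnp x0) ltac:(unfold n; lia)) as [e He].
  assert (Hfmu : forall mu, Cmod mu < 1 -> inBall (vscal mu y)).
  { intros mu Hmu. unfold inBall. rewrite vnorm_scal. cnorm. pose proof (Cmod_ge_0 mu). nra. }
  assert (HBm : forall mu, Cmod mu < 1 -> Cmod (Cminus (f (vscal mu y)) (Py (vscal mu x0))) < eta).
  { intros mu Hmu. assert (Hin : inBall (vscal mu x0)).
    { unfold inBall. rewrite vnorm_scal. cnorm. pose proof (Cmod_ge_0 mu). pose proof (vnorm_ge0 _ x0). nra. }
    specialize (HPyg _ Hin). unfold gy in HPyg. rewrite (dual_scal phi) in HPyg by auto.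
    rewrite Hx0 in HPyg. cnorm. rewrite Cmult_1_r in HPyg. auto. }
  assert (HC : forall i, (i < n)%nat -> Cmod (e i) * rho ^ i <= B1 + eta).
  { apply (CE e n (fun mu => Py (vscal mu x0)) rho (B1 + eta)); auto. unfold rho; lra.
    intros mu Hmu. assert (Cmod mu < 1) by (rewrite Hmu; unfold rho; lra).
    specialize (HBm mu H). specialize (HB' _ (Hfmu mu H)).
    replace (Py (vscal mu x0)) with (Cminus (f (vscal mu y)) (Cminus (f (vscal mu y)) (Py (vscal mu x0)))) by (cnorm; ring).
    eapply Rle_trans. apply Cmod_triangle. rewrite Cmod_opp. lra. }
  assert (HD : Cmod (Cminus (Py (vscal (RtoC r) x0)) (csum N (fun i => Cmult (e i) (Cpow (RtoC r) i)))) <= (B1 + eta) * (q ^ N / (1 - q))).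
  { rewrite He. rewrite (csum_split N n) by (unfold n; lia).
    eapply Rle_trans. apply csum_norm.
    eapply Rle_trans with (rsum n (fun i => (B1 + eta) * (if Nat.ltb i N then 0 else q ^ i))).
    { apply rsum_le. intros i Hi. destruct (Nat.ltb i N).
      - rewrite Cmod_0. lra.
      - rewrite Cmod_mult, Cpow_RtoC, Cmod_R, Rabs_right by (apply Rle_ge, pow_le; lra).
        replace (r ^ i) with (rho ^ i * q ^ i). 2:{ rewrite <- Rpow_mult_distr. f_equal. unfold q, rho. field. lra. }
        rewrite <- Rmult_assoc. apply Rmult_le_compat_r. apply pow_le; lra. apply HC; auto. }
    rewrite rsum_scal. apply Rmult_le_compat_l. pose proof (proj1 Heta); lra. apply geom_tail; auto. }
  assert (HE : forall j, (j < N)%nat ->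
    Cmod (Cminus (Cmult (e j) (RtoC (c ^ j))) (Hj j w)) * (1 / 2) ^ j <= 2 * eta).
  { intros j Hj'. destruct (HnQ w) as [cq Hcq].
    set (m' := Datatypes.S (Nat.max n (Nat.max nQ N))).
    set (u := fun mu => Py (vscal (Cmult (RtoC c) mu) x0)).
    set (qq := fun mu => Q (vscal mu w)).
    assert (Hu' : forall mu, u mu = csum n (fun i => Cmult (Cmult (e i) (RtoC (c ^ i))) (Cpow mu i))).
    { intros mu. unfold u. rewrite He. apply csum_ext; intros. rewrite Cpow_mult, Cpow_RtoC. ring. }
    pose proof (DFT_poly m' u _ n j (1/2) ltac:(unfold m'; lia) ltac:(unfold m'; lia) ltac:(unfold m'; lia) Hu') as D1.
    pose proof (DFT_poly m' qq cq nQ j (1/2) ltac:(unfold m'; lia) ltac:(unfold m'; lia) ltac:(unfold m'; lia) Hcq) as D2.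
    pose proof (DFT_poly m qq cq nQ j 1 ltac:(unfold m; lia) ltac:(unfold m; lia) ltac:(unfold m; lia) Hcq) as D3.
    assert (Hb : Cmod (DFT m' (fun mu => Cminus (u mu) (qq mu)) j (1/2)) <= 2 * eta).
    { apply DFT_bound. unfold m'; lia. lra. intros mu Hmu.
      assert (E1 : f (vscal (Cmult (RtoC c) mu) y) = h (vscal mu w)).
      { unfold h, w, Lw. rewrite !(proj2 HlS), ST, !vscal_assocC. apply f_equal.
        apply (f_equal (fun a => vscal a y)).
        unfold c. destruct mu as [a b]. apply injective_projections; simpl; field; lra. }
      assert (Hcm : Cmod (Cmult (RtoC c) mu) < 1).
      { rewrite Cmod_mult, Cmod_R, Rabs_right, Hmu by lra. nra. }
      assert (Hin : inBall (vscal mu w)).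
      { unfold inBall. rewrite vnorm_scal. cnorm. rewrite Hmu. pose proof (vnorm_ge0 _ w). nra. }
      pose proof (HBm _ Hcm) as HB1'. pose proof (HQh _ Hin) as HQ1. cnorm.
      unfold u, qq. rewrite E1 in HB1'.
      replace (Cminus (Py (vscal (Cmult (RtoC c) mu) x0)) (Q (vscal mu w))) with
        (Cplus (Copp (Cminus (h (vscal mu w)) (Py (vscal (Cmult (RtoC c) mu) x0)))) (Cminus (h (vscal mu w)) (Q (vscal mu w)))) by ring.
      eapply Rle_trans. apply Cmod_triangle. rewrite Cmod_opp. lra. }
    rewrite DFT_sub, D1, D2 in Hb. change (Hj j w) with (DFT m qq j 1). rewrite D3.
    destruct (Nat.ltb_spec j n); [|unfold n in *; lia].
    rewrite pow1, Cmult_1_r.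
    replace (Cminus (Cmult (Cmult (e j) (RtoC (c ^ j))) (RtoC ((1 / 2) ^ j))) (Cmult (if Nat.ltb j nQ then cq j else RtoC 0) (RtoC ((1 / 2) ^ j))))
      with (Cmult (Cminus (Cmult (e j) (RtoC (c ^ j))) (if Nat.ltb j nQ then cq j else RtoC 0)) (RtoC ((1 / 2) ^ j))) in Hb by ring.
    rewrite Cmod_mult, Cmod_R, Rabs_right in Hb by (apply Rle_ge, pow_le; lra). auto. }
  assert (HF : Cmod (Cminus (csum N (fun i => Cmult (e i) (Cpow (RtoC r) i))) (csum N (fun j => Cmult (RtoC ((r / c) ^ j)) (Hj j (Lw y))))) <= INR N * ((2 / c) ^ N * (2 * eta))).
  { rewrite csum_sub.
    eapply Rle_trans. apply csum_norm. rewrite <- rsum_const. apply rsum_le. intros j Hj'.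
    assert (Eq : Cminus (Cmult (e j) (Cpow (RtoC r) j)) (Cmult (RtoC ((r / c) ^ j)) (Hj j (Lw y))) =
       Cmult (RtoC ((r / c) ^ j * 2 ^ j)) (Cmult (Cminus (Cmult (e j) (RtoC (c ^ j))) (Hj j w)) (RtoC ((1/2) ^ j)))).
    { fold w. rewrite Cpow_RtoC. replace (r ^ j) with ((r / c) ^ j * c ^ j).
      2:{ rewrite <- Rpow_mult_distr. f_equal. field. lra. }
      assert (E2 : Cmult (RtoC (2 ^ j)) (RtoC ((1 / 2) ^ j)) = RtoC 1).
      { rewrite <- RtoC_mult, <- Rpow_mult_distr. replace (2 * (1/2)) with 1 by field. rewrite pow1. reflexivity. }
      rewrite !RtoC_mult.
      transitivity (Cmult (Cmult (RtoC ((r / c) ^ j)) (Cminus (Cmult (e j) (RtoC (c ^ j))) (Hj j w))) (Cmult (RtoC (2 ^ j)) (RtoC ((1 / 2) ^ j)))).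
      rewrite E2. ring. ring. }
    rewrite Eq, Cmod_mult, Cmod_mult, Cmod_R, Cmod_R, Rabs_right, (Rabs_right ((1/2)^j)).
    2: apply Rle_ge, pow_le; lra.
    2: apply Rle_ge; apply Rmult_le_pos; apply pow_le; try lra; apply Rdiv_le_0_compat; lra.
    pose proof (HE j Hj') as HEj.
    assert (Hp : (r / c) ^ j * 2 ^ j <= (2 / c) ^ N).
    { rewrite <- Rpow_mult_distr. apply Rle_trans with ((2 / c) ^ j).
      apply pow_incr. split. apply Rmult_le_pos. apply Rdiv_le_0_compat; lra. lra.
      unfold Rdiv. assert (0 < / c) by (apply Rinv_0_lt_compat; lra). nra.
      apply Rle_pow. apply (Rmult_le_reg_l c). lra. unfold Rdiv. rewrite Rmult_1_r, <- Rmult_assoc, (Rmult_comm c 2), Rmult_assoc, Rinv_r by lra. lra. lia. }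
    apply Rmult_le_compat; auto. apply Rmult_le_pos; apply pow_le; try lra; apply Rdiv_le_0_compat; lra.
    apply Rmult_le_pos. apply Cmod_ge_0. apply pow_le; lra. }
  pose proof (HBm (RtoC r) ltac:(rewrite Cmod_R, Rabs_right; lra)) as HBr.
  cnorm.
  fold w in HF |- *.
  set (F0 := csum N (fun j => Cmult (RtoC ((r / c) ^ j)) (Hj j w))) in *.
  set (S0 := csum N (fun i => Cmult (e i) (Cpow (RtoC r) i))) in *.
  replace (Cminus (f y) F0) with
    (Cplus (Cminus (f y) (f (vscal (RtoC r) y))) (Cplus (Cminus (f (vscal (RtoC r) y)) (Py (vscal (RtoC r) x0)))
      (Cplus (Cminus (Py (vscal (RtoC r) x0)) S0) (Cminus S0 F0)))) by ring.
  eapply Rle_lt_trans. apply Cmod_tri4.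
  destruct Heta as [He1 [He2 He3]].
  assert (INR N * ((2 / c) ^ N * (2 * eta)) <= eps / 4).
  { eapply Rle_trans; [|apply He3]. unfold Cst. 
    assert (0 <= INR N * (2 / c) ^ N) by (apply Rmult_le_pos; [apply pos_INR|apply pow_le; apply Rdiv_le_0_compat; lra]). nra. }
  assert ((B1 + eta) * (q ^ N / (1 - q)) <= (B1 + 1) * (q ^ N / (1 - q))).
  { apply Rmult_le_compat_r. apply Rdiv_le_0_compat. apply pow_le; lra. lra. lra. }
  assert (eta <= eps / 8). { unfold eta. eapply Rle_trans. apply Rmin_l. apply Rmult_le_reg_r with (8 * Cst). lra.
     replace (eps / (8 * Cst) * (8 * Cst)) with eps by (field; lra). nra. }
  lra.
Qed.


Theorem lemma2p9 (X Y : CBanach) :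
  Au_eq_A X -> isomorphic Y X -> Au_eq_A Y.
Proof.
  intros HX [T [S [HlT [HbT [HlS [HbS [ST TS]]]]]]] f. split.
  - apply (Au_to_A X Y T S); auto.
  - apply (A_to_Au X Y T S); auto.
Qed.
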